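(* Let $m\in\mathbb{Z}_2$ with $v_2(m)$ odd, and $f(x)=x^2+(-1-4m)x$ on $\mathbb{Z}_2$. Then $f$ has the two fixed points $0$ and $4m+2$, $f(1+2\mathbb{Z}_2)\subset 2\mathbb{Z}_2$, and $$2\mathbb{Z}_2=\{0,4m+2\}\sqcup E_1\sqcup E_2\sqcup E_3,$$ where $$E_1=\bigsqcup_{n\ge4}\big(4m+2+2^{n-2}+2^{n-1}\mathbb{Z}_2\big)-\{\text{II-}[1]\},$$ $$E_2=\bigsqcup_{4\le n\le\lfloor v_2(m)/2\rfloor+3}\big(2^{n-2}+2^{n-1}\mathbb{Z}_2\big)-\{\text{II-}[2n-5]\},$$ $$E_3=\bigsqcup_{n>\lfloor v_2(m)/2\rfloor+3}\big(2^{n-2}+2^{n-1}\mathbb{Z}_2\big)-\{\text{II-}[v_2(m)+1]\}.$$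
   Context: $v_2$ is the $2$-adic valuation. For $n\ge1$, $f_n$ is the induced map on $\mathbb{Z}/2^n\mathbb{Z}$, $f_n(x\bmod 2^n)=f(x)\bmod 2^n$. A cycle of $f_n$ (at level $n$) of length $k$ is a tuple $\sigma=(x_1,\dots,x_k)$ of distinct elements with $f_n(x_i)=x_{i+1}$, $f_n(x_k)=x_1$. The set $X_\sigma=\{y\in\mathbb{Z}/2^{n+1}\mathbb{Z}:y\bmod 2^n\in\sigma\}$ is $f_{n+1}$-invariant; its cycles are the lifts of $\sigma$. $\sigma$ grows if $X_\sigma$ is a single cycle of length $2k$ and splits if it is a union of two cycles of length $k$. For $k\ge0$, ''$\sigma$ splits $k$ times and then its lifts grow forever'' means every cycle at levels $n,\dots,n+k-1$ lying above $\sigma$ (reducing mod $2^n$ into $\sigma$) splits, and every cycle at every level $\ge n+k$ lying above $\sigma$ grows. A set $F=(x+2^n\mathbb{Z}_2)\cup(y+2^n\mathbb{Z}_2)$ with $(x\bmod 2^n,y\bmod 2^n)$ a 2-cycle of $f_n$ is of type II-$[k]$ if this 2-cycle splits $k$ times and then its lifts grow forever (then $F$ is the disjoint union of $2^k$ clopen invariant sets, each a union of two balls of radius $2^{-n-k}$, on each of which $f$ is minimal). The notation $E=\bigsqcup_{n\in J}F_n-\{\text{II-}[k]\}$ means $E$ is the disjoint union of the sets $F_n$, each of type II-$[k]$ (with $k$ possibly depending on $n$ as indicated). *)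

(* Defs.v *)
From mathcomp Require Import all_boot all_order.
Set Implicit Arguments.
Unset Strict Implicit.
Unset Printing Implicit Defensive.

(* The 2-adic integers Z_2, as the inverse limit of the rings Z/2^k Z:      *)
(* an element x is the compatible sequence of its canonical residues        *)
(* res x k = (x mod 2^k) in [0, 2^k).                                       *)
Record Z2 := MkZ2 {
  res : nat -> nat ;
  res_lt : forall k, res k < 2 ^ k ;
  res_compat : forall k, res k.+1 = res k %[mod 2 ^ k] }.

Lemma modn_pow2S a k : a %% 2 ^ k.+1 %% 2 ^ k = a %% 2 ^ k.
Proof. by rewrite modn_dvdm // expnS dvdn_mull. Qed.

Definition normZ2 (g : nat -> nat) (H : forall k, g k.+1 = g k %[mod 2 ^ k]) : Z2.
Proof.
refine (@MkZ2 (fun k => g k %% 2 ^ k) _ _).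
- by move=> k; rewrite ltn_pmod // expn_gt0.
- by move=> k /=; rewrite modn_pow2S modn_mod H.
Defined.

Lemma Z2c_compat (a : nat) : forall k, a = a %[mod 2 ^ k].
Proof. by []. Qed.

Definition Z2c (a : nat) : Z2 := normZ2 (Z2c_compat a).

Lemma Z2add_compat (x y : Z2) :
  forall k, res x k.+1 + res y k.+1 = res x k + res y k %[mod 2 ^ k].
Proof. by move=> k; rewrite -modnDm (res_compat x) (res_compat y) modnDm. Qed.

Definition Z2add (x y : Z2) : Z2 := normZ2 (Z2add_compat x y).

Lemma Z2mul_compat (x y : Z2) :
  forall k, res x k.+1 * res y k.+1 = res x k * res y k %[mod 2 ^ k].
Proof. by move=> k; rewrite -modnMm (res_compat x) (res_compat y) modnMm. Qed.

Definition Z2mul (x y : Z2) : Z2 := normZ2 (Z2mul_compat x y).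

Lemma Z2opp_compat (x : Z2) :
  forall k, 2 ^ k.+1 - res x k.+1 = 2 ^ k - res x k %[mod 2 ^ k].
Proof.
move=> k; apply/eqP; rewrite -(eqn_modDl (res x k.+1)).
rewrite subnKC; last exact: ltnW (res_lt x k.+1).
rewrite -modnDml (res_compat x) modnDml subnKC; last exact: ltnW (res_lt x k).
by rewrite expnS modnMl modnn.
Qed.

Definition Z2opp (x : Z2) : Z2 := normZ2 (Z2opp_compat x).

(* x \in a + 2^n Z_2, i.e. x = a mod 2^n *)
Definition ball (a : Z2) (n : nat) (x : Z2) : Prop := res x n = res a n.

Definition v2_is (x : Z2) (v : nat) : Prop :=
  ball (Z2c 0) v x /\ ~ ball (Z2c 0) v.+1 x.

(* Induced maps on Z/2^n Z (represented by 'I_(2^n)):                       *)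
(* f_n (x mod 2^n) = f(x) mod 2^n, computed on the lift x = i in Z_2.       *)
Definition fn (f : Z2 -> Z2) (n : nat) (i : 'I_(2 ^ n)) : 'I_(2 ^ n) :=
  Ordinal (res_lt (f (Z2c i)) n).
Arguments fn : clear implicits.

Definition is_cycle (T : finType) (g : T -> T) (C : {set T}) (k : nat) : Prop :=
  exists x : T, [/\ 0 < k, iter k g x = x,
                    C = [set iter (nat_of_ord j) g x | j : 'I_k] & #|C| = k].

Definition above (n l : nat) (sigma : {set 'I_(2 ^ n)}) : {set 'I_(2 ^ l)} :=
  [set y : 'I_(2 ^ l) | [exists x in sigma, nat_of_ord x == y %% 2 ^ n]].
Arguments above : clear implicits.

Definition grows (f : Z2 -> Z2) (n k : nat) (sigma : {set 'I_(2 ^ n)}) : Prop :=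
  is_cycle (fn f n.+1) (above n n.+1 sigma) (2 * k).

Arguments grows : clear implicits.

Definition splits (f : Z2 -> Z2) (n k : nat) (sigma : {set 'I_(2 ^ n)}) : Prop :=
  exists C1 C2 : {set 'I_(2 ^ n.+1)},
    [/\ is_cycle (fn f n.+1) C1 k, is_cycle (fn f n.+1) C2 k,
        [disjoint C1 & C2] & above n n.+1 sigma = C1 :|: C2].

Arguments splits : clear implicits.

Definition splits_then_grows (f : Z2 -> Z2) (n s : nat) (sigma : {set 'I_(2 ^ n)})
  : Prop :=
  forall (l : nat) (C : {set 'I_(2 ^ l)}) (k : nat),
    n <= l -> is_cycle (fn f l) C k -> C \subset above n l sigma ->
    (l < n + s -> splits f l k C) /\ (n + s <= l -> grows f l k C).

Arguments splits_then_grows : clear implicits.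

Definition typeII (f : Z2 -> Z2) (s : nat) (F : Z2 -> Prop) : Prop :=
  exists (n : nat) (x y : Z2),
    (forall z, F z <-> ball x n z \/ ball y n z) /\
    let a : 'I_(2 ^ n) := Ordinal (res_lt x n) in
    let b : 'I_(2 ^ n) := Ordinal (res_lt y n) in
    is_cycle (fn f n) [set a; b] 2 /\ splits_then_grows f n s [set a; b].

Definition fm (m : Z2) (x : Z2) : Z2 :=
  Z2add (Z2mul x x) (Z2mul (Z2add (Z2opp (Z2c 1)) (Z2opp (Z2mul (Z2c 4) m))) x).

(* Main.v *)
Require Import Defs.
From mathcomp Require Import all_boot all_order all_algebra.
From mathcomp Require Import zify ring.
From Stdlib Require Import FunctionalExtensionality ProofIrrelevance Classical.
Import Defs.
Import GRing.Theory Num.Theory.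
Set Implicit Arguments.
Unset Strict Implicit.
Unset Printing Implicit Defensive.
Local Open Scope ring_scope.

Definition dv (k : nat) (a : int) := exists q : int, a = q * 2 ^+ k.
Definition exv (k : nat) (a : int) := exists q : int, a = (2 * q + 1) * 2 ^+ k.

Lemma p2_neq0 k : (2 ^+ k : int) != 0.
Proof. by rewrite expf_neq0. Qed.

Lemma dv_add k a b : dv k a -> dv k b -> dv k (a + b).
Proof. by move=> [q ->] [r ->]; exists (q + r); ring. Qed.
Lemma dv_opp k a : dv k a -> dv k (- a).
Proof. by move=> [q ->]; exists (- q); ring. Qed.
Lemma dv_sub k a b : dv k a -> dv k b -> dv k (a - b).
Proof. by move=> ha hb; apply: dv_add => //; apply: dv_opp. Qed.
Lemma dv_mull k a b : dv k a -> dv k (b * a).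
Proof. by move=> [q ->]; exists (b * q); ring. Qed.
Lemma dv_mulr k a b : dv k a -> dv k (a * b).
Proof. by move=> [q ->]; exists (b * q); ring. Qed.
Lemma dv0 k : dv k 0.
Proof. by exists 0; ring. Qed.
Lemma dv_le j k a : dv k a -> (j <= k)%N -> dv j a.
Proof.
move=> [q ->] /subnKC <-; exists (q * 2 ^+ (k - j)); rewrite exprD; ring.
Qed.
Lemma dv_mul j k a b : dv j a -> dv k b -> dv (j + k) (a * b).
Proof. by move=> [q ->] [r ->]; exists (q * r); rewrite exprD; ring. Qed.
Lemma dv_p2 j k : (j <= k)%N -> dv j (2 ^+ k).
Proof. by move=> h; apply: (@dv_le _ k) => //; exists 1; ring. Qed.
Lemma dv_0 a : dv 0 a.
Proof. by exists a; ring. Qed.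

Lemma exv_dv k a : exv k a -> dv k a.
Proof. by move=> [q ->]; exists (2 * q + 1). Qed.
Lemma exv_ndv k a : exv k a -> ~ dv k.+1 a.
Proof.
move=> [q ->] [r]; rewrite exprS mulrA => /(mulIf (p2_neq0 k)) => h.
lia.
Qed.
Lemma exv_ndv_le j k a : exv k a -> (k < j)%N -> ~ dv j a.
Proof. by move=> h hj hd; exact: (exv_ndv h (dv_le hd hj)). Qed.

Lemma parity (q : int) : exists r, q = 2 * r \/ q = 2 * r + 1.
Proof.
exists (q %/ 2)%Z; have := divz_eq q 2; have := modz_ge0 q (isT : (2:int) != 0).
have := ltz_pmod q (isT : (0:int) < 2). lia.
Qed.

Lemma exv_of k a : dv k a -> ~ dv k.+1 a -> exv k a.
Proof.
move=> [q ->] hn; have [r [hr|hr]] := parity q; rewrite hr in hn *.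
  by case: hn; exists r; rewrite exprS; ring.
by exists r.
Qed.
Lemma exv_mul j k a b : exv j a -> exv k b -> exv (j + k) (a * b).
Proof.
move=> [q ->] [r ->]; exists (2 * q * r + q + r); rewrite exprD; ring.
Qed.
Lemma exv_add k a b : exv k a -> dv k.+1 b -> exv k (a + b).
Proof.
move=> [q ->] [r ->]; exists (q + r); rewrite exprS; ring.
Qed.
Lemma exv_opp k a : exv k a -> exv k (- a).
Proof. by move=> [q ->]; exists (- q - 1); ring. Qed.
Lemma exv_p2 k : exv k (2 ^+ k).
Proof. by exists 0; ring. Qed.

Lemma dv_oddK t a u : exv 0 u -> dv t (a * u) -> dv t a.
Proof.
move=> hu; elim: t => [|t IH] h; first exact: dv_0.
have [q hq] := IH (dv_le h (leqnSn t)).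
have [r [hr|hr]] := parity q.
  by exists r; rewrite hq hr exprS; ring.
have ha : exv t a by exists r; rewrite hq hr.
by have := exv_mul ha hu; rewrite addn0 => /exv_ndv.
Qed.

Definition taylor (S : int -> Prop) (H D : int -> int) :=
  forall Y d k, S Y -> dv k d -> dv (k + k) (H (Y + d) - H Y - D Y * d).

Definition good (S : int -> Prop) (H D : int -> int) (w : nat) :=
  [/\ (forall Y, S Y -> S (H Y)), taylor S H D,
      (forall Y, S Y -> exists q, D Y = 1 + 4 * q),
      (forall Y, S Y -> exv w (H Y - Y)) & (2 <= w)%N].

Lemma taylor_comp S H D : (forall Y, S Y -> S (H Y)) -> taylor S H D ->
  taylor S (fun y => H (H y)) (fun y => D (H y) * D y).
Proof.
move=> hS hT Y d k sY hd.
have h1 := hT Y d k sY hd.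
have hde : dv k (H (Y + d) - H Y).
  have -> : H (Y + d) - H Y = (H (Y + d) - H Y - D Y * d) + D Y * d by ring.
  apply: dv_add; last exact: dv_mull.
  by apply: (dv_le h1); rewrite leq_addr.
have h2 := hT (H Y) _ k (hS _ sY) hde.
have -> : H (H (Y + d)) - H (H Y) - D (H Y) * D Y * d =
   (H (H Y + (H (Y + d) - H Y)) - H (H Y) - D (H Y) * (H (Y + d) - H Y))
     + D (H Y) * (H (Y + d) - H Y - D Y * d).
  have -> : H Y + (H (Y + d) - H Y) = H (Y + d) by rewrite addrC subrK.
  ring.
by apply: dv_add => //; apply: dv_mull.
Qed.

Lemma good2 S H D w : good S H D w ->
  good S (fun y => H (H y)) (fun y => D (H y) * D y) w.+1.
Proof.
case=> hS hT hD hE hw; split => //.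
- by move=> Y sY; exact: (hS _ (hS _ sY)).
- exact: taylor_comp.
- move=> Y sY; have [a ->] := hD _ (hS _ sY); have [b ->] := hD _ sY.
  by exists (a + b + 4 * a * b); ring.
- move=> Y sY.
  have hT1 := hT Y (H Y - Y) w sY (exv_dv (hE _ sY)).
  have e1 : Y + (H Y - Y) = H Y by rewrite addrC subrK.
  rewrite e1 in hT1.
  have [a ha] := hD _ sY.
  have -> : H (H Y) - Y = (H (H Y) - H Y - D Y * (H Y - Y))
                          + (H Y - Y) * (2 * (2 * a + 1)).
    by rewrite ha; ring.
  rewrite addrC; apply: exv_add.
    rewrite (_ : w.+1 = w + 1)%N; last by rewrite addn1.
    apply: exv_mul; first exact: hE.
    by exists a; ring.
  by apply: (dv_le hT1); lia.
- by apply: leqW.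
Qed.

Lemma tele S H w : (forall Y, S Y -> S (H Y)) -> (forall Y, S Y -> dv w (H Y - Y)) ->
  forall a Y, S Y -> dv w (iter a H Y - Y).
Proof.
move=> hS hd a Y sY.
have hSi : forall a, S (iter a H Y).
  by elim=> [|b IH] //=; apply: hS.
elim: a => [|a IH] /=; first by rewrite subrr; apply: dv0.
have -> : H (iter a H Y) - Y = (H (iter a H Y) - iter a H Y) + (iter a H Y - Y) by ring.
by apply: dv_add => //; apply: hd.
Qed.

Lemma iter_double (T : Type) (H : T -> T) a Y :
  iter (a * 2) H Y = iter a (fun y => H (H y)) Y.
Proof. by elim: a => [|a IH] //; rewrite mulSn iterD IH. Qed.

Lemma good_pow u : forall S H D w, good S H D w ->
  forall Y, S Y -> exv (w + u) (iter (2 ^ u) H Y - Y).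
Proof.
elim: u => [|u IH] S H D w hg Y sY.
  by rewrite addn0 expn0 /=; case: hg => _ _ _ he _; apply: he.
rewrite expnSr iter_double.
by rewrite -addSnnS; apply: (IH _ _ _ _ (good2 hg)).
Qed.

Lemma good_aper u : forall S H D w, good S H D w ->
  forall Y h, S Y -> (0 < h < 2 ^ u)%N -> ~ dv (w + u) (iter h H Y - Y).
Proof.
elim: u => [|u IH] S H D w hg Y h sY hh.
  by exfalso; rewrite expn0 in hh; lia.
have hg2 := good2 hg.
have hh2 := odd_double_half h.
case: hg => hS hT hD hE hw.
case hodd: (odd h) hh2 => /= hh2.
-
  have -> : h = (h./2 * 2)%N.+1 by move: hh2; rewrite -muln2; lia.
  rewrite iterSr iter_double.
  have -> : iter h./2 (fun y => H (H y)) (H Y) - Y =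
       (iter h./2 (fun y => H (H y)) (H Y) - H Y) + (H Y - Y) by ring.
  apply: (@exv_ndv_le _ w); last by lia.
  rewrite addrC; apply: exv_add; first exact: hE.
  apply: (tele (S := S)) => //; first by move=> Z sZ; exact: (hS _ (hS _ sZ)).
    by move=> Z sZ; case: hg2 => _ _ _ he _; apply: exv_dv; apply: he.
  by apply: hS.
- have -> : h = (h./2 * 2)%N by move: hh2; rewrite -muln2; lia.
  rewrite iter_double -addSnnS; apply: (IH _ _ _ _ hg2) => //.
  rewrite expnS in hh; lia.
Qed.

Lemma level_per S F' D e w0 l Y :
  (forall Y, S Y -> S (F' Y)) ->
  good S (fun y => F' (F' y)) D e ->
  (forall Y, S Y -> exv w0 (F' Y - Y)) -> (w0 < e)%N -> (w0 < l)%N -> S Y ->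
  dv l (iter (2 ^ (l - e) * 2) F' Y - Y) /\
  (forall k, (0 < k < 2 ^ (l - e) * 2)%N -> ~ dv l (iter k F' Y - Y)).
Proof.
move=> hS hg hw0 hwe hl sY.
have hGS : forall Z, S Z -> S (F' (F' Z)) by move=> Z sZ; exact: (hS _ (hS _ sZ)).
have hGd : forall Z, S Z -> dv e (F' (F' Z) - Z).
  by move=> Z sZ; case: hg => _ _ _ he _; apply: exv_dv; apply: he.
split.
  rewrite iter_double; have := good_pow (l - e) hg sY => /exv_dv h.
  by apply: (dv_le h); lia.
move=> k hk; have hh2 := odd_double_half k.
case hodd: (odd k) hh2 => /= hh2.
- have -> : k = (k./2 * 2)%N.+1 by move: hh2; rewrite -muln2; lia.
  rewrite iterSr iter_double.
  have -> : iter k./2 (fun y => F' (F' y)) (F' Y) - Y =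
       (iter k./2 (fun y => F' (F' y)) (F' Y) - F' Y) + (F' Y - Y) by ring.
  apply: (@exv_ndv_le _ w0) => //.
  rewrite addrC; apply: exv_add; first exact: hw0.
  have := tele hGS hGd k./2 (hS _ sY) => h.
  by apply: (dv_le h); lia.
- have ek : k = (k./2 * 2)%N by move: hh2; rewrite -muln2; lia.
  rewrite ek iter_double in hk *.
  have hle : (0 < l - e)%N.
    case E: (l - e)%N hk => [|t] //; rewrite expn0; lia.
  have := good_aper hg sY (h := k./2) (u := l - e).
  rewrite subnKC; last by lia.
  apply; lia.
Qed.

Definition FF (M Y : int) := Y * (Y - (1 + 4 * M)).
Definition DF (M Y : int) := 2 * Y - (1 + 4 * M).
Definition PP (M : int) := 4 * M + 2.

Lemma FF_taylor M S : taylor S (FF M) (DF M).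
Proof.
move=> Y d k _ hd; have -> : FF M (Y + d) - FF M Y - DF M Y * d = d * d.
  by rewrite /FF /DF; ring.
exact: dv_mul.
Qed.

Lemma G_minus M Y : FF M (FF M Y) - Y = Y * (Y - PP M) * (Y * Y - 4 * M * Y - 4 * M).
Proof. by rewrite /FF /PP; ring. Qed.

Lemma good_FF M S e :
  (forall Y, S Y -> S (FF M Y)) -> (forall Y, S Y -> dv 1 Y) ->
  (forall Y, S Y -> exv e (FF M (FF M Y) - Y)) -> (2 <= e)%N ->
  good S (fun y => FF M (FF M y)) (fun y => DF M (FF M y) * DF M y) e.
Proof.
move=> hS hev hE he; split => //.
- by move=> Y sY; exact: (hS _ (hS _ sY)).
- exact: taylor_comp hS (@FF_taylor M S).
- move=> Y sY; have [a ha] := hev _ (hS _ sY); have [b hb] := hev _ sY.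
  rewrite /DF ha hb expr1.
  exists (4 * a * b - a * (1 + 4 * M) - b * (1 + 4 * M) + 2 * M + 4 * M * M); ring.
Qed.

Lemma dv2_exv1 Z M : dv 2 Z -> exv 1 (Z + 4 * M + 2).
Proof. by move=> [q ->]; exists (q + M); rewrite expr1; ring. Qed.
Lemma dv2_exv0 Z M : dv 2 Z -> exv 0 (Z - (1 + 4 * M)).
Proof. by move=> [q ->]; exists (2 * q - 2 * M - 1); rewrite expr0; ring. Qed.

Lemma caseB M v j e : exv v M -> odd v -> (2 <= j)%N ->
  e = (if (j + j < v + 2)%N then (3 * j + 1)%N else (j + v + 3)%N) ->
  [/\ (forall Y, exv j Y -> exv j (FF M Y)),
      good (exv j) (fun y => FF M (FF M y)) (fun y => DF M (FF M y) * DF M y) e &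
      (forall Y, exv j Y -> exv j.+1 (FF M Y - Y))].
Proof.
move=> hM hv hj he.
have d2 : forall Y, exv j Y -> dv 2 Y by move=> Y /exv_dv h; apply: (dv_le h).
have hP : forall Y, exv j Y -> exv 1 (Y - PP M).
  move=> Y /d2 hY; rewrite /PP.
  have -> : Y - (4 * M + 2) = (Y - 8 * M - 4) + 4 * M + 2 by ring.
  apply: dv2_exv1; apply: dv_sub; first apply: dv_sub => //.
    by exists (2 * M); rewrite expr2; ring.
  by exists 1; rewrite expr2; ring.
have hinv : forall Y, exv j Y -> exv j (FF M Y).
  move=> Y hY; rewrite /FF -[j]addn0; apply: exv_mul => //.
  exact: dv2_exv0 (d2 _ hY).
have h4M : exv (2 + v) (4 * M).
  by apply: exv_mul => //; exists 0; rewrite expr2; ring.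
split => //.
- apply: good_FF => //.
  + by move=> Y /exv_dv h; apply: (dv_le h); lia.
  + move=> Y hY; rewrite G_minus.
    have hYP : exv (j + 1) (Y * (Y - PP M)) by apply: exv_mul => //; apply: hP.
    have hYY : exv (j + j) (Y * Y) by apply: exv_mul.
    have h4MY : dv (2 + v + j) (4 * M * Y) by apply: dv_mul; [apply: exv_dv|apply: exv_dv].
    case: ifP he => hjv ->.
    * have -> : (3 * j + 1 = (j + 1) + (j + j))%N by lia.
      apply: exv_mul => //.
      have -> : Y * Y - 4 * M * Y - 4 * M = Y * Y + (- (4 * M * Y) - 4 * M) by ring.
      apply: exv_add => //; apply: dv_sub; first apply: dv_opp.
        by apply: (dv_le h4MY); lia.
      by apply: (dv_le (exv_dv h4M)); lia.
    * have hne : (j + j != v + 2)%N.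
        apply/eqP => E; have : odd (j + j) = odd (v + 2) by rewrite E.
        by rewrite addnn odd_double addn2 /= hv.
      have -> : (j + v + 3 = (j + 1) + (2 + v))%N by lia.
      apply: exv_mul => //.
      have -> : Y * Y - 4 * M * Y - 4 * M = - (4 * M) + (Y * Y - 4 * M * Y) by ring.
      apply: exv_add; first exact: exv_opp.
      apply: dv_sub.
        by apply: (dv_le (exv_dv hYY)); lia.
      by apply: (dv_le h4MY); lia.
  + by case: ifP he => _ ->; lia.
- move=> Y hY; have -> : FF M Y - Y = Y * (Y - PP M) by rewrite /FF /PP; ring.
  by rewrite -addn1; apply: exv_mul => //; apply: hP.
Qed.

Lemma caseA M v j : exv v M -> odd v -> (2 <= j)%N ->
  let S := fun Y => exv j (Y - PP M) in
  [/\ (forall Y, S Y -> S (FF M Y)),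
      good S (fun y => FF M (FF M y)) (fun y => DF M (FF M y) * DF M y) (j + 3) &
      (forall Y, S Y -> exv j.+1 (FF M Y - Y))].
Proof.
move=> hM hv hj S.
have d2 : forall Y, S Y -> dv 2 (Y - PP M) by move=> Y /exv_dv h; apply: (dv_le h).
have h1 : forall Y, S Y -> exv 1 Y.
  move=> Y /d2 hY; have -> : Y = (Y - PP M) + 4 * M + 2 by rewrite /PP; ring.
  exact: dv2_exv1.
have hinv : forall Y, S Y -> S (FF M Y).
  move=> Y hY; rewrite /S.
  have -> : FF M Y - PP M = (Y - PP M) * (Y + 1) by rewrite /FF /PP; ring.
  rewrite -[j]addn0; apply: exv_mul => //.
  have [q ->] := h1 _ hY; by exists (2 * q + 1); rewrite expr1 expr0; ring.
have [M2 hM2] : dv 1 M.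
  apply: (dv_le (exv_dv hM)); case: v hv {hM} => //.
split => //.
- apply: good_FF => //.
  + by move=> Y /h1 /exv_dv.
  + move=> Y hY; rewrite G_minus.
    have hYP : exv (1 + j) (Y * (Y - PP M)) by apply: exv_mul => //; apply: h1.
    have -> : (j + 3 = (1 + j) + 2)%N by lia.
    apply: exv_mul => //.
    set Z := Y - PP M.
    have -> : Y * Y - 4 * M * Y - 4 * M = 4 * (M + 1) + (Z * Z + 4 * (M + 1) * Z).
      by rewrite /Z /PP; ring.
    apply: exv_add.
      by rewrite hM2; exists M2; rewrite expr1 expr2; ring.
    have hZ : dv j Z by apply: exv_dv.
    apply: dv_add.
      by apply: (dv_le (dv_mul hZ hZ)); lia.
    apply: (dv_le (dv_mul (j := 2) _ hZ)); last by lia.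
    by exists (M + 1); rewrite expr2; ring.
  + by lia.
- move=> Y hY; have -> : FF M Y - Y = Y * (Y - PP M) by rewrite /FF /PP; ring.
  by rewrite -add1n; apply: exv_mul => //; apply: h1.
Qed.

Lemma p2z k : ((2 ^ k)%N : int) = 2 ^+ k.
Proof. by rewrite -natz natrX. Qed.

Lemma res_low x j k : (j <= k)%N -> res x j = (res x k %% 2 ^ j)%N.
Proof.
move=> /subnKC <-; elim: (k - j)%N => [|t IH].
  by rewrite addn0 modn_small // res_lt.
rewrite addnS -(modn_dvdm _ (dvdn_exp2l 2 (leq_addr t j))) (res_compat x) modn_dvdm.
  by rewrite -IH.
exact: dvdn_exp2l (leq_addr t j).
Qed.

Lemma dv_modn k n : dv k ((n %% 2 ^ k)%N%:Z - n%:Z).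
Proof.
exists (- (n %/ 2 ^ k)%N%:Z); rewrite {2}(divn_eq n (2 ^ k)) PoszD PoszM p2z; ring.
Qed.

Lemma dv_modn_eq k a b : (a %% 2 ^ k = b %% 2 ^ k)%N -> dv k (a%:Z - b%:Z).
Proof.
move=> h; have h1 := dv_modn k a; have h2 := dv_modn k b.
have -> : a%:Z - b%:Z = ((b %% 2 ^ k)%N%:Z - b%:Z) - ((a %% 2 ^ k)%N%:Z - a%:Z).
  by rewrite h; ring.
exact: dv_sub.
Qed.

Lemma dv_small k a b : (a < 2 ^ k)%N -> (b < 2 ^ k)%N -> dv k (a%:Z - b%:Z) -> a = b.
Proof.
move=> ha hb [q hq]; have hN : (0 < 2 ^+ k :> int) by rewrite exprn_gt0.
have ha' : a%:Z < 2 ^+ k by rewrite -p2z ltz_nat.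
have hb' : b%:Z < 2 ^+ k by rewrite -p2z ltz_nat.
move: hq ha' hb' hN; move: (2 ^+ k : int) => N.
move=> hq ha' hb' hN.
have : q = 0 by nia.
move=> q0; rewrite q0 mul0r in hq; lia.
Qed.

Lemma Z2_ext x y : (forall k, res x k = res y k) -> x = y.
Proof.
case: x y => rx lx cx [ry ly cy] /= h.
have E : rx = ry by apply: functional_extensionality.
subst ry; f_equal; apply: proof_irrelevance.
Qed.

Definition rep k (x : Z2) (X : int) := dv k ((res x k)%:Z - X).

Lemma rep_res k x : rep k x (res x k).
Proof. by rewrite /rep subrr; apply: dv0. Qed.

Lemma rep_eq k x y X : rep k x X -> rep k y X -> res x k = res y k.
Proof.
move=> hx hy; apply: dv_small; try exact: res_lt.
have -> : (res x k)%:Z - (res y k)%:Z = ((res x k)%:Z - X) - ((res y k)%:Z - X) by ring.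
exact: dv_sub.
Qed.

Lemma rep_dv k x X Y : rep k x X -> rep k x Y -> dv k (X - Y).
Proof.
move=> hX hY; have -> : X - Y = ((res x k)%:Z - Y) - ((res x k)%:Z - X) by ring.
exact: dv_sub.
Qed.

Lemma rep_congr k x X Y : rep k x X -> dv k (X - Y) -> rep k x Y.
Proof.
move=> hX hd; rewrite /rep; have -> : (res x k)%:Z - Y = ((res x k)%:Z - X) + (X - Y) by ring.
exact: dv_add.
Qed.

Lemma ball_rep k c x C X : rep k c C -> rep k x X -> (ball c k x <-> dv k (X - C)).
Proof.
move=> hc hx; rewrite /ball; split.
  move=> E.
  have -> : X - C = ((res c k)%:Z - C) - ((res x k)%:Z - X)
                    + ((res x k)%:Z - (res c k)%:Z) by ring.
  by rewrite E subrr addr0; rewrite /rep E in hx; apply: dv_sub.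
move=> hd; apply: (rep_eq hx); apply: (rep_congr hc).
by rewrite -opprB; apply: dv_opp.
Qed.

Lemma rep_low j k x X : rep k x X -> (j <= k)%N -> rep j x X.
Proof.
move=> hx hjk; rewrite /rep (res_low x hjk).
have -> : ((res x k %% 2 ^ j)%N%:Z - X) =
   ((res x k %% 2 ^ j)%N%:Z - (res x k)%:Z) + ((res x k)%:Z - X) by ring.
by apply: dv_add; [apply: dv_modn | apply: (dv_le hx)].
Qed.

Lemma rep_Z2c k a : rep k (Z2c a) a%:Z.
Proof. exact: dv_modn. Qed.

Lemma rep_add k x y X Y : rep k x X -> rep k y Y -> rep k (Z2add x y) (X + Y).
Proof.
move=> hx hy; rewrite /rep /=.
have -> : ((res x k + res y k) %% 2 ^ k)%N%:Z - (X + Y) =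
  (((res x k + res y k) %% 2 ^ k)%N%:Z - (res x k + res y k)%N%:Z)
  + ((res x k)%:Z - X) + ((res y k)%:Z - Y) by rewrite PoszD; ring.
by apply: dv_add => //; apply: dv_add => //; apply: dv_modn.
Qed.

Lemma rep_mul k x y X Y : rep k x X -> rep k y Y -> rep k (Z2mul x y) (X * Y).
Proof.
move=> hx hy; rewrite /rep /=.
have -> : ((res x k * res y k) %% 2 ^ k)%N%:Z - (X * Y) =
  (((res x k * res y k) %% 2 ^ k)%N%:Z - (res x k * res y k)%N%:Z)
  + ((res x k)%:Z - X) * (res y k)%:Z + X * ((res y k)%:Z - Y) by rewrite PoszM; ring.
apply: dv_add; last exact: dv_mull.
by apply: dv_add; [apply: dv_modn | apply: dv_mulr].
Qed.

Lemma rep_opp k x X : rep k x X -> rep k (Z2opp x) (- X).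
Proof.
move=> hx; rewrite /rep /=.
have hle : (res x k <= 2 ^ k)%N by apply: ltnW; apply: res_lt.
have h1 := dv_modn k (2 ^ k - res x k).
have e : ((2 ^ k - res x k)%N : int) = 2 ^+ k - (res x k : int) by rewrite -subzn // p2z.
rewrite e in h1; move: h1 hx; rewrite /rep.
move: ((2 ^ k - res x k) %% 2 ^ k)%N => t h1 hx.
have -> : t%:Z - - X = (t%:Z - (2 ^+ k - (res x k)%:Z)) + 2 ^+ k - ((res x k)%:Z - X) by ring.
apply: dv_sub => //; apply: dv_add => //.
by exists 1; ring.
Qed.

Lemma rep_fm k m x M X : rep k m M -> rep k x X -> rep k (fm m x) (FF M X).
Proof.
move=> hm hx; rewrite /fm.
have h := rep_add (rep_mul hx hx)
  (rep_mul (rep_add (rep_opp (rep_Z2c k 1)) (rep_opp (rep_mul (rep_Z2c k 4) hm))) hx).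
apply: (rep_congr h); rewrite /FF.
have -> : X * X + (- (1%N%:Z) + - (4%N%:Z * M)) * X - X * (X - (1 + 4 * M)) = 0 by ring.
exact: dv0.
Qed.

Lemma rep_iter k m x M X n : rep k m M -> rep k x X ->
  rep k (iter n (fm m) x) (iter n (FF M) X).
Proof.
move=> hm hx; elim: n => [|n IH] //=; exact: rep_fm.
Qed.

Lemma res_Z2c a k : res (Z2c a) k = (a %% 2 ^ k)%N.
Proof. by []. Qed.

Lemma res_Z2c_ord l (i : 'I_(2 ^ l)) : res (Z2c i) l = i.
Proof. by rewrite res_Z2c modn_small. Qed.

Lemma two_vals l A B Y : (A < 2 ^ l.+1)%N -> (B < 2 ^ l.+1)%N -> (Y < 2 ^ l.+1)%N ->
  (A %% 2 ^ l = B %% 2 ^ l)%N -> (Y %% 2 ^ l = A %% 2 ^ l)%N -> A <> B -> Y = A \/ Y = B.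
Proof.
rewrite expnS => hA hB hY eAB eYA nAB.
have hD : (0 < 2 ^ l)%N by rewrite expn_gt0.
have qA : (A %/ 2 ^ l < 2)%N by rewrite ltn_divLR // mulnC.
have qB : (B %/ 2 ^ l < 2)%N by rewrite ltn_divLR // mulnC.
have qY : (Y %/ 2 ^ l < 2)%N by rewrite ltn_divLR // mulnC.
have dA := divn_eq A (2 ^ l); have dB := divn_eq B (2 ^ l); have dY := divn_eq Y (2 ^ l).
move: qA qB qY dA dB dY eAB eYA nAB.
move: (A %/ 2 ^ l)%N (B %/ 2 ^ l)%N (Y %/ 2 ^ l)%N => [|[|?]] [|[|?]] [|[|?]] //=; lia.
Qed.

Section Gen.
Variables (f : Z2 -> Z2) (c0 : Z2) (n s : nat).
Hypothesis hf : forall x y l, res x l = res y l -> res (f x) l = res (f y) l.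
Hypothesis hn : (0 < n)%N.
Hypothesis H0 : forall x, ball c0 (n - 1) x -> res (f x) (n - 1) = res x (n - 1).
Hypothesis H1 : forall x l, ball c0 (n - 1) x -> (n <= l)%N ->
  res (iter (2 ^ (l - (n + s)) * 2) f x) l = res x l.
Hypothesis H2 : forall x l k, ball c0 (n - 1) x -> (n <= l)%N ->
  (0 < k < 2 ^ (l - (n + s)) * 2)%N -> res (iter k f x) l <> res x l.

Local Notation Per l := (2 ^ (l - (n + s)) * 2)%N.

Lemma iter_resp x y l k : res x l = res y l -> res (iter k f x) l = res (iter k f y) l.
Proof. by move=> h; elim: k => [|k IH] //=; apply: hf. Qed.

Lemma iter_fn l (i : 'I_(2 ^ l)) k :
  nat_of_ord (iter k (fn f l) i) = res (iter k f (Z2c i)) l.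
Proof.
elim: k => [|k IH]; first by rewrite res_Z2c_ord.
rewrite iterS /fn /=; apply: hf; by rewrite res_Z2c_ord IH.
Qed.

Lemma B_iter x k : ball c0 (n - 1) x -> ball c0 (n - 1) (iter k f x).
Proof.
move=> hx; elim: k => [|k IH] //=; rewrite /ball in IH *.
by rewrite H0 // IH.
Qed.

Lemma B_mod a b l : (n - 1 <= l)%N -> (a %% 2 ^ l = b %% 2 ^ l)%N ->
  ball c0 (n - 1) (Z2c a) -> ball c0 (n - 1) (Z2c b).
Proof.
move=> hl e; rewrite /ball !res_Z2c => <-.
have hd : (2 ^ (n - 1) %| 2 ^ l)%N by apply: dvdn_exp2l.
by rewrite -(modn_dvdm a hd) e modn_dvdm.
Qed.

Lemma orbit_inj l (i : 'I_(2 ^ l)) j j' : (n <= l)%N -> ball c0 (n - 1) (Z2c i) ->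
  (j < j' < Per l)%N -> iter j (fn f l) i <> iter j' (fn f l) i.
Proof.
move=> hl hi hj E; have := congr1 (@nat_of_ord _) E; rewrite !iter_fn.
have -> : j' = ((j' - j) + j)%N by rewrite subnK //; lia.
rewrite iterD => /esym; apply: H2; first exact: B_iter.
  by [].
lia.
Qed.

Lemma cycle_at l (i : 'I_(2 ^ l)) : (n <= l)%N -> ball c0 (n - 1) (Z2c i) ->
  is_cycle (fn f l) [set iter j (fn f l) i | j : 'I_(Per l)] (Per l).
Proof.
move=> hl hi; exists i; split => //.
- by rewrite muln_gt0 expn_gt0.
- by apply/val_inj; rewrite /= iter_fn H1 //; exact: res_Z2c_ord.
- rewrite (@card_imset _ _ (fun j : 'I_(Per l) => iter j (fn f l) i) (mem 'I_(Per l))) ?card_ord //.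
  move=> j j' E; apply/val_inj; case: (ltngtP j j') => // h.
    by exfalso; apply: (orbit_inj hl hi _ E); rewrite h ltn_ord.
  by exfalso; apply: (orbit_inj hl hi _ (esym E)); rewrite h ltn_ord.
Qed.

Lemma red l (i' : 'I_(2 ^ l.+1)) (i : 'I_(2 ^ l)) j : (i' %% 2 ^ l = i)%N ->
  (nat_of_ord (iter j (fn f l.+1) i') %% 2 ^ l)%N = nat_of_ord (iter j (fn f l) i).
Proof.
move=> e; rewrite !iter_fn -res_low //; apply: iter_resp.
by rewrite res_Z2c res_Z2c_ord.
Qed.


Lemma iter_mod (T : Type) (g : T -> T) k y j : iter k g y = y -> iter j g y = iter (j %% k) g y.
Proof.
move=> h; rewrite {1}(divn_eq j k) addnC iterD.
suff -> : iter (j %/ k * k)%N g y = y by [].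
by elim: (j %/ k)%N => [|q IH] //; rewrite mulSn iterD IH.
Qed.

Lemma per_at l (y : 'I_(2 ^ l)) : (n <= l)%N -> ball c0 (n - 1) (Z2c y) ->
  iter (Per l) (fn f l) y = y.
Proof. by move=> hl hy; apply/val_inj; rewrite /= iter_fn H1 //; exact: res_Z2c_ord. Qed.

Lemma stg (a b : 'I_(2 ^ n)) : nat_of_ord a = res c0 n -> nat_of_ord b = res (f c0) n ->
  splits_then_grows f n s [set a; b].
Proof.
move=> ha hb l C k hl [y0 [k0 hit hC hcard]] hsub.
have hc0 : ball c0 (n - 1) c0 by [].
have y0C : y0 \in C by rewrite hC; apply/imsetP; exists (Ordinal k0).
have By0 : ball c0 (n - 1) (Z2c y0).
  have := subsetP hsub _ y0C; rewrite inE => /existsP [x /andP [hx /eqP hxe]].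
  rewrite /ball res_Z2c.
  have hd : (2 ^ (n - 1) %| 2 ^ n)%N by apply: dvdn_exp2l; lia.
  rewrite -(modn_dvdm y0 hd) -hxe.
  move: hx; rewrite !inE => /orP [] /eqP ->.
    by rewrite ha -res_low // leq_subr.
  by rewrite hb -res_low ?leq_subr // H0.
have hinj : forall j j' : 'I_k, iter j (fn f l) y0 = iter j' (fn f l) y0 -> j = j'.
  have : #|[set iter j (fn f l) y0 | j : 'I_k]| == #|'I_k| by rewrite -hC hcard card_ord.
  by move/imset_injP => h j j' E; apply: h.
have hk : k = Per l.
  case: (ltngtP k (Per l)) => // h.
    exfalso; apply: (H2 (k := k) By0 hl); first by rewrite k0 h.
    by rewrite -iter_fn hit res_Z2c_ord.
  have := hinj (Ordinal h) (Ordinal k0); rewrite /= per_at // => /(_ erefl) [].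
  by move=> /eqP; rewrite muln_eq0 expn_eq0.
have Cmem : forall j, iter j (fn f l) y0 \in C.
  move=> j; rewrite (iter_mod _ hit) hC; apply/imsetP.
  by exists (Ordinal (ltn_pmod j k0)).
have Cinv : forall y, y \in C -> exists2 j, (j < k)%N & y = iter j (fn f l) y0.
  by move=> y; rewrite hC => /imsetP [j _ ->]; exists j.
have hy1 : (y0 < 2 ^ l.+1)%N by rewrite expnS; have := ltn_ord y0; lia.
have hy2 : (y0 + 2 ^ l < 2 ^ l.+1)%N by rewrite expnS; have := ltn_ord y0; lia.
pose y1 : 'I_(2 ^ l.+1) := Ordinal hy1.
pose y2 : 'I_(2 ^ l.+1) := Ordinal hy2.
have ry1 : (nat_of_ord y1 %% 2 ^ l = y0)%N by rewrite /= modn_small.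
have ry2 : (nat_of_ord y2 %% 2 ^ l = y0)%N by rewrite /= modnDr modn_small.
have hl1 : (n - 1 <= l)%N by lia.
have By1 : ball c0 (n - 1) (Z2c y1).
  by apply: (B_mod hl1 _ By0); rewrite ry1 ?modn_small.
have By2 : ball c0 (n - 1) (Z2c y2).
  by apply: (B_mod hl1 _ By0); rewrite ry2 ?modn_small.
have rd1 := fun j => red j ry1.
have rd2 := fun j => red j ry2.
case: (ltnP l (n + s)) => hls; split => h; try (exfalso; lia).
-
  have hPl : Per l.+1 = k by rewrite hk; congr (2 ^ _ * 2)%N; lia.
  have pe1 := per_at (l := l.+1) (y := y1) (leqW hl) By1.
  have pe2 := per_at (l := l.+1) (y := y2) (leqW hl) By2.
  rewrite hPl in pe1 pe2.
  have neq : forall j, (j < k)%N -> iter j (fn f l.+1) y1 <> iter j (fn f l.+1) y2.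
    move=> j hj E; have : iter (k - j) (fn f l.+1) (iter j (fn f l.+1) y1) =
                          iter (k - j) (fn f l.+1) (iter j (fn f l.+1) y2) by rewrite E.
    rewrite -!iterD subnK ?(ltnW hj) // pe1 pe2 => /(congr1 (@nat_of_ord _)) /=.
    by have := expn_gt0 2 l; lia.
  have c1 := cycle_at (l := l.+1) (leqW hl) By1.
  have c2 := cycle_at (l := l.+1) (leqW hl) By2.
  rewrite hPl in c1 c2.
  exists [set iter j (fn f l.+1) y1 | j : 'I_k], [set iter j (fn f l.+1) y2 | j : 'I_k].
  split => //.
  + rewrite -setI_eq0; apply/eqP/setP => y; rewrite !inE.
    apply/negP => /andP [/imsetP [j _ e1] /imsetP [j' _ e2]].
    have r := congr1 (fun z : 'I_(2 ^ l.+1) => (nat_of_ord z %% 2 ^ l)%N) (etrans (esym e1) e2).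
    rewrite /= rd1 rd2 in r; have jj := hinj j j' (val_inj r).
    by subst j'; apply: (neq j (ltn_ord j)); rewrite -e1 -e2.
  + apply/setP => y; rewrite inE [in RHS]inE; apply/idP/idP.
      case/existsP => x /andP [xC /eqP xe]; have [j hj ex] := Cinv _ xC.
      have := two_vals (ltn_ord (iter j (fn f l.+1) y1)) (ltn_ord (iter j (fn f l.+1) y2))
                (ltn_ord y) _ _ (fun E => neq j hj (val_inj E)).
      rewrite rd1 rd2 -xe ex => /(_ erefl erefl) [] E; apply/orP.
        by left; apply/imsetP; exists (Ordinal hj) => //; apply: val_inj.
      by right; apply/imsetP; exists (Ordinal hj) => //; apply: val_inj.
    case/orP => /imsetP [j _ ->]; apply/existsP; exists (iter j (fn f l) y0).
      by rewrite Cmem /= rd1.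
    by rewrite Cmem /= rd2.
-
  have hPl : Per l.+1 = (2 * k)%N.
    by rewrite hk (_ : l.+1 - (n + s) = (l - (n + s)).+1)%N ?expnS; lia.
  have c1 := cycle_at (l := l.+1) (leqW hl) By1.
  rewrite hPl in c1.
  rewrite /grows (_ : above l l.+1 C = [set iter j (fn f l.+1) y1 | j : 'I_(2 * k)]) //.
  apply/setP => y; rewrite inE; apply/idP/idP.
    case/existsP => x /andP [xC /eqP xe]; have [j hj ex] := Cinv _ xC.
    have hjk : (j + k < 2 * k)%N by lia.
    have hj2 : (j < 2 * k)%N by lia.
    have := two_vals (ltn_ord (iter j (fn f l.+1) y1)) (ltn_ord (iter (j + k) (fn f l.+1) y1))
                (ltn_ord y) _ _ _.
    rewrite !rd1 iterD hit -xe ex => /(_ erefl erefl) [].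
        by move=> E; apply: (orbit_inj (l := l.+1) (leqW hl) By1 (j := j) (j' := j + k));
          [rewrite hPl; lia | apply: val_inj].
      by move=> E; apply/imsetP; exists (Ordinal hj2) => //; apply: val_inj.
    by move=> E; apply/imsetP; exists (Ordinal hjk) => //; apply: val_inj.
  case/imsetP => j _ ->; apply/existsP; exists (iter j (fn f l) y0).
  by rewrite Cmem /= rd1.
Qed.

Lemma typeII_gen : typeII f s (ball c0 (n - 1)).
Proof.
have hc0 : ball c0 (n - 1) c0 by [].
have hPn : Per n = 2 by rewrite (_ : n - (n + s) = 0)%N //; lia.
have hw1 : res (f c0) (n - 1) = res c0 (n - 1) := H0 hc0.
have hw2 : res (f c0) n <> res c0 n.
  by apply: (H2 (x := c0) (l := n) (k := 1)) => //; rewrite hPn.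
have en : n = (n - 1).+1 by lia.
exists n, c0, (f c0); split.
  move=> z; rewrite /ball; split.
    move=> hz.
    have := @two_vals (n - 1) (res c0 n) (res (f c0) n) (res z n).
    rewrite -en !res_lt -!res_low ?leq_subr // hw1 hz => /(_ isT isT isT erefl erefl).
    by case/(_ (fun E => hw2 (esym E))) => ->; [left | right].
  case=> h; rewrite (res_low z (leq_subr 1 n)) h -res_low ?leq_subr //.
set a : 'I_(2 ^ n) := Ordinal (res_lt c0 n).
set b : 'I_(2 ^ n) := Ordinal (res_lt (f c0) n).
have hab : fn f n a = b.
  by apply/val_inj; apply: hf; exact: res_Z2c_ord.
split; last exact: stg.
exists a; split => //.
- have Ba : ball c0 (n - 1) (Z2c a).
    by rewrite /ball res_Z2c /= -res_low // leq_subr.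
  by have := per_at (leqnn n) Ba; rewrite hPn.
- apply/setP => y; rewrite !inE; apply/orP/imsetP.
    case=> /eqP ->; first by exists ord0.
    by exists (Ordinal (isT : (1 < 2)%N)) => //=; rewrite hab.
  case=> j _ ->; case: j => [[|[|j]]] //= hj; [left | right] => //.
  by rewrite hab.
- rewrite cards2; case: eqP => // E.
  by have := congr1 (@nat_of_ord _) E; rewrite /= => /esym.
Qed.

End Gen.

Lemma fm_resp m x y l : res x l = res y l -> res (fm m x) l = res (fm m y) l.
Proof.
move=> e; apply: (rep_eq (X := FF (res m l) (res x l))).
  exact: rep_fm (rep_res _ _) (rep_res _ _).
by apply: rep_fm (rep_res _ _) _; rewrite /rep e subrr; apply: dv0.
Qed.

Lemma Mexv m v l : v2_is m v -> exv v (res m (l + v.+1))%:Z.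
Proof.
case=> h0 h1; set M := (res m (l + v.+1))%:Z.
have rM : forall k, (k <= l + v.+1)%N -> rep k m M.
  by move=> k hk; apply: (rep_low (rep_res _ _)).
apply: exv_of.
  have r0 : rep v m 0 by rewrite /rep h0 res_Z2c mod0n subrr; apply: dv0.
  by rewrite -[M]subr0; apply: (rep_dv (rM v _) r0); lia.
move=> hd; apply: h1; rewrite /ball.
apply: (rep_eq (rM v.+1 _)); first by lia.
by apply: (rep_congr (rep_Z2c _ 0)); rewrite -opprB; apply: dv_opp; rewrite subr0.
Qed.

Lemma typeII_inst m v (c0 : Z2) (j s : nat) (S : int -> int -> Prop) :
  v2_is m v ->
  (forall M, exv v M -> [/\ forall Y, S M Y -> S M (FF M Y),
       good (S M) (fun y => FF M (FF M y)) (fun y => DF M (FF M y) * DF M y) (j.+2 + s)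
     & forall Y, S M Y -> exv j.+1 (FF M Y - Y)]) ->
  (forall x l, ball c0 j.+1 x -> (j.+1 <= l)%N -> S (res m (l + v.+1))%:Z (res x l)%:Z) ->
  (j.+1 < j.+2 + s)%N ->
  typeII (fm m) s (ball c0 (j.+2 - 1)).
Proof.
move=> hv hS hmem hlt.
have key : forall x l, ball c0 j.+1 x -> (j.+1 <= l)%N ->
    let M := (res m (l + v.+1))%:Z in
    [/\ rep l m M, rep l x (res x l), S M (res x l)%:Z &
        [/\ forall Y, S M Y -> S M (FF M Y),
          good (S M) (fun y => FF M (FF M y)) (fun y => DF M (FF M y) * DF M y) (j.+2 + s)
        & forall Y, S M Y -> exv j.+1 (FF M Y - Y)]].
  move=> x l hx hl M; split.
  - by apply: (rep_low (rep_res _ _)); lia.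
  - exact: rep_res.
  - exact: hmem.
  - by apply: hS; apply: Mexv.
apply: (typeII_gen (n := j.+2)) => //.
- exact: fm_resp.
- move=> x hx; have [rM rx sX [hI hG hF]] := key x j.+1 hx (leqnn _).
  apply: (rep_eq (X := (res x j.+1)%:Z)) => //.
  apply: (rep_congr (rep_fm rM rx)); exact: exv_dv (hF _ sX).
- move=> x l hx hl; have [rM rx sX [hI hG hF]] := key x l hx (ltnW hl).
  have [h1 _] := level_per hI hG hF hlt hl sX.
  apply: (rep_eq (X := (res x l)%:Z)) => //.
  exact: (rep_congr (rep_iter _ rM rx) h1).
- move=> x l k hx hl hk E; have [rM rx sX [hI hG hF]] := key x l hx (ltnW hl).
  have [_ h2] := level_per hI hG hF hlt hl sX.
  apply: (h2 k hk).
  apply: (rep_dv (rep_iter k rM rx)).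
  by rewrite /rep E; exact: rep_res.
Qed.

Definition pZ (m : Z2) := Z2add (Z2mul (Z2c 4) m) (Z2c 2).

Lemma rep_p k m M : rep k m M -> rep k (pZ m) (PP M).
Proof.
move=> hm; apply: (rep_congr (rep_add (rep_mul (rep_Z2c k 4) hm) (rep_Z2c k 2))).
rewrite /PP; have -> : 4%N%:Z * M + 2%N%:Z - (4 * M + 2) = 0 by ring.
exact: dv0.
Qed.

Lemma rep_cA k m M j : rep k m M -> rep k (Z2add (pZ m) (Z2c (2 ^ j))) (PP M + 2 ^+ j).
Proof. by move=> hm; rewrite -p2z; apply: rep_add (rep_p hm) (rep_Z2c _ _). Qed.

Lemma rep_cB k j : rep k (Z2c (2 ^ j)) (2 ^+ j).
Proof. by rewrite -p2z; apply: rep_Z2c. Qed.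

Lemma dv2_P Z M : dv 2 Z -> exv 1 (Z + PP M).
Proof. by move=> h; rewrite /PP addrA; apply: dv2_exv1. Qed.

Lemma ball_low c k j x : ball c k x -> (j <= k)%N -> ball c j x.
Proof. by rewrite /ball => e hj; rewrite (res_low x hj) (res_low c hj) e. Qed.

Lemma caseB_typeII m v j s : v2_is m v -> odd v -> (2 <= j)%N ->
  (j.+2 + s = if (j + j < v + 2)%N then (3 * j + 1)%N else (j + v + 3)%N)%N ->
  typeII (fm m) s (ball (Z2c (2 ^ j)) (j.+2 - 1)).
Proof.
move=> hv ho hj E.
apply: (typeII_inst (v := v) (S := fun _ Y => exv j Y)) => //.
- by move=> M hM; apply: (caseB hM ho hj E).
- move=> x l hx hl.
  have rx : rep j.+1 x (res x l)%:Z by apply: (rep_low (rep_res _ _)).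
  have := (ball_rep (rep_cB j.+1 j) rx).1 hx => hd.
  have -> : (res x l)%:Z = 2 ^+ j + ((res x l)%:Z - 2 ^+ j) by ring.
  exact: exv_add (exv_p2 j) hd.
- by lia.
Qed.

Lemma caseA_typeII m v j : v2_is m v -> odd v -> (2 <= j)%N ->
  typeII (fm m) 1 (ball (Z2add (pZ m) (Z2c (2 ^ j))) (j.+2 - 1)).
Proof.
move=> hv ho hj.
apply: (typeII_inst (v := v) (S := fun M Y => exv j (Y - PP M))) => //.
- move=> M hM; have [h1 h2 h3] := caseA hM ho hj.
  by split => //; rewrite (_ : (j.+2 + 1 = j + 3)%N) //; lia.
- move=> x l hx hl.
  have rx : rep j.+1 x (res x l)%:Z by apply: (rep_low (rep_res _ _)).
  have rm : rep j.+1 m (res m (l + v.+1))%:Z by apply: (rep_low (rep_res _ _)); lia.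
  have := (ball_rep (rep_cA j rm) rx).1 hx => hd.
  have -> : (res x l)%:Z - PP (res m (l + v.+1))%:Z =
     2 ^+ j + ((res x l)%:Z - (PP (res m (l + v.+1))%:Z + 2 ^+ j)) by ring.
  exact: exv_add (exv_p2 j) hd.
- by lia.
Qed.

Lemma dv2_Pm Z M : dv 2 Z -> exv 1 (Z - PP M).
Proof. by move=> [q ->]; exists (q - M - 1); rewrite /PP expr1 expr2; ring. Qed.

Lemma peel k a w : exv 1 w -> dv k.+1 (a * w) -> dv k a.
Proof.
move=> [q ->] [r hr]; apply: (@dv_oddK _ _ (2 * q + 1)); first by exists q; rewrite expr0; ring.
exists r; apply: (mulIf (isT : (2 : int) != 0)).
transitivity (a * ((2 * q + 1) * 2 ^+ 1)); first by rewrite expr1; ring.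
by rewrite hr exprS; ring.
Qed.

Lemma first_diff x y : x <> y -> res x 2 = res y 2 ->
  exists j, [/\ (2 <= j)%N, res x j = res y j & res x j.+1 <> res y j.+1].
Proof.
move=> hne h2.
have [k hk] : exists k, res x k != res y k.
  apply: NNPP => H; apply: hne; apply: Z2_ext => k.
  by apply/eqP; apply/negPn/negP => hk; apply: H; exists k.
case: (ex_minnP (ex_intro (fun k => res x k != res y k) k hk)) => k0 hk0 hmin.
have low : forall i, (i <= 2)%N -> res x i = res y i.
  by move=> i hi; rewrite (res_low x hi) (res_low y hi) h2.
have h3 : (3 <= k0)%N.
  by case: ltnP => // hk3; move: hk0; rewrite low ?eqxx //; lia.
exists k0.-1; split; first by lia.
  apply/eqP; apply/negPn/negP => hc; have := hmin _ hc; lia.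
by rewrite prednK; [apply/eqP | lia].
Qed.

Lemma next_level c u x j : res x j = res u j -> res x j.+1 <> res u j.+1 ->
  res c j = res u j -> res c j.+1 <> res u j.+1 -> res x j.+1 = res c j.+1.
Proof.
move=> e1 n1 e2 n2.
have := @two_vals j (res u j.+1) (res c j.+1) (res x j.+1) (res_lt _ _) (res_lt _ _) (res_lt _ _).
rewrite -!res_low // e2 e1 => /(_ erefl erefl (fun E => n2 (esym E))) [] //.
Qed.

Lemma two_centers c1 c2 k x C1 C2 : rep k c1 C1 -> rep k c2 C2 ->
  ball c1 k x -> ball c2 k x -> dv k (C1 - C2).
Proof.
rewrite /ball /rep => h1 h2 e1 e2; apply: (rep_dv (x := x)); rewrite /rep; [rewrite e1 | rewrite e2] => //.
Qed.

Lemma fix_part m x : fm m x = x <-> x = Z2c 0 \/ x = pZ m.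
Proof.
have rp : forall k, rep k (pZ m) (PP (res m k)%:Z) by move=> k; apply: rep_p; apply: rep_res.
have r0 : forall k, rep k (Z2c 0) 0 by move=> k; exact: (rep_Z2c k 0).
split; last first.
  case=> ->; apply: Z2_ext => k.
    apply: (rep_eq (X := 0)); last exact: r0.
    apply: (rep_congr (rep_fm (rep_res k m) (r0 k))).
    by rewrite /FF; rewrite (_ : 0 * (0 - (1 + 4 * (res m k)%:Z)) - 0 = 0); [apply: dv0 | ring].
  apply: (rep_eq (X := PP (res m k)%:Z)); last exact: rp.
  apply: (rep_congr (rep_fm (rep_res k m) (rp k))).
  by rewrite /FF /PP; rewrite (_ : _ - _ = 0); [apply: dv0 | ring].
move=> E.
have hd : forall k, dv k ((res x k)%:Z * ((res x k)%:Z - PP (res m k)%:Z)).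
  move=> k; have h := rep_fm (rep_res k m) (rep_res k x); rewrite E in h.
  have := rep_dv h (rep_res k x).
  by rewrite /FF /PP; rewrite -(_ : forall a b : int, a * (a - (1 + 4 * b)) - a = a * (a - (4 * b + 2))) //;
    move=> a b; ring.
have r2 : forall k, (2 <= k)%N -> dv 2 ((res x 2)%:Z - (res x k)%:Z).
  by move=> k hk; exact: (rep_low (rep_res k x) hk).
have : (res x 2 = 0 \/ res x 2 = 1 \/ res x 2 = 2 \/ res x 2 = 3)%N.
  by have := res_lt x 2; lia.
case=> [h|[h|[h|h]]].
- left; apply: Z2_ext => k.
  have hX : dv 2 (res x k.+2)%:Z.
    by have := r2 k.+2 isT; rewrite h sub0r => /dv_opp; rewrite opprK.
  have hk1 := peel (@dv2_Pm _ (res m k.+2)%:Z hX) (hd k.+2).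
  have hk := dv_le hk1 (leqnSn _).
  apply: (rep_eq (X := 0)); last exact: r0.
  apply: (rep_congr (rep_low (rep_res k.+2 x) (leqW (leqnSn _)))).
  by rewrite subr0.
- exfalso; have := hd 2; rewrite h => /(dv_le) /(_ (isT : (1 <= 2)%N)).
  apply: (exv_ndv (k := 0)); rewrite /PP.
  exists (- 2 * (res m 2)%:Z - 1); rewrite expr0; ring.
- right; apply: Z2_ext => k.
  have hX : exv 1 (res x k.+2)%:Z.
    have [q hq] := r2 k.+2 isT; rewrite h in hq.
    exists (- q); rewrite expr1; move: hq; rewrite expr2 => hq.
    have -> : (res x k.+2)%:Z = 2 - (2%N%:Z - (res x k.+2)%:Z) by ring.
    by rewrite hq; ring.
  have := hd k.+2; rewrite mulrC => /(peel hX) /dv_le /(_ (leqnSn _)) hk.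
  apply: (rep_eq (X := PP (res m k.+2)%:Z)); last first.
    exact: (rep_low (rp k.+2) (leqW (leqnSn _))).
  exact: (rep_congr (rep_low (rep_res k.+2 x) (leqW (leqnSn _))) hk).
- exfalso; have := hd 2; rewrite h => /(dv_le) /(_ (isT : (1 <= 2)%N)).
  apply: (exv_ndv (k := 0)); rewrite /PP.
  exists (1 - 6 * (res m 2)%:Z); rewrite expr0; ring.
Qed.

Lemma odd_part m x : ball (Z2c 1) 1 x -> ball (Z2c 0) 1 (fm m x).
Proof.
move=> hx; have h1 : res x 1 = 1%N by rewrite hx.
apply: (rep_eq (X := 0)); last exact: (rep_Z2c 1 0).
apply: (rep_congr (rep_fm (rep_res 1 m) (rep_res 1 x))).
rewrite h1 /FF; exists (- 2 * (res m 1)%:Z); rewrite expr1; ring.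
Qed.

Lemma neq_part m : Z2c 0 <> pZ m.
Proof.
move=> E; have := rep_p (rep_res 2 m); rewrite -E => h.
have := rep_dv (rep_Z2c 2 0) h; rewrite (_ : 0%N%:Z - PP (res m 2)%:Z = 0 - PP (res m 2)%:Z) //.
apply: exv_ndv; apply: dv2_Pm; exact: dv0.
Qed.

Lemma gj n : (4 <= n)%N -> exists2 j, (2 <= j)%N & n = j.+2.
Proof. by move=> hn; exists (n - 2)%N; lia. Qed.

Lemma e2 j : (j.+2 - 2 = j)%N. Proof. by lia. Qed.

Lemma pts_part m n : (4 <= n)%N ->
  [/\ ~ ball (Z2add (pZ m) (Z2c (2 ^ (n - 2)))) (n - 1) (Z2c 0),
      ~ ball (Z2add (pZ m) (Z2c (2 ^ (n - 2)))) (n - 1) (pZ m),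
      ~ ball (Z2c (2 ^ (n - 2))) (n - 1) (Z2c 0) &
      ~ ball (Z2c (2 ^ (n - 2))) (n - 1) (pZ m)].
Proof.
move=> /gj [j hj ->]; rewrite e2 /=.
set M := (res m j.+1)%:Z.
have rm : rep j.+1 m M by exact: rep_res.
have d2 : dv 2 (2 ^+ j) by apply: dv_p2.
split => h.
- have hd := (ball_rep (rep_cA j rm) (rep_Z2c _ 0)).1 h.
  have := @dv_le 2 _ _ hd ltac:(lia).
  rewrite (_ : 0%N%:Z - _ = - (2 ^+ j + PP M)); last by ring.
  by apply: exv_ndv; apply: exv_opp; apply: dv2_P.
- have := (ball_rep (rep_cA j rm) (rep_p rm)).1 h.
  rewrite (_ : PP M - _ = - 2 ^+ j); last by ring.
  by apply: exv_ndv; apply: exv_opp; apply: exv_p2.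
- have := (ball_rep (rep_cB j.+1 j) (rep_Z2c _ 0)).1 h.
  rewrite (_ : 0%N%:Z - _ = - 2 ^+ j); last by ring.
  by apply: exv_ndv; apply: exv_opp; apply: exv_p2.
- have hd := (ball_rep (rep_cB j.+1 j) (rep_p rm)).1 h.
  have := @dv_le 2 _ _ hd ltac:(lia).
  rewrite (_ : PP M - _ = (- 2 ^+ j) + PP M); last by ring.
  by apply: exv_ndv; apply: dv2_P; apply: dv_opp.
Qed.

Lemma AA_aux m j j' x : (j < j')%N ->
  ~ (ball (Z2add (pZ m) (Z2c (2 ^ j))) j.+1 x /\ ball (Z2add (pZ m) (Z2c (2 ^ j'))) j'.+1 x).
Proof.
move=> hjj [h1 h2]; have h2' := @ball_low _ _ j.+1 _ h2 ltac:(lia).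
have rm := rep_res j.+1 m.
have := two_centers (rep_cA j rm) (rep_cA j' rm) h1 h2'.
rewrite (_ : _ - _ = 2 ^+ j - 2 ^+ j'); last by ring.
move=> hd; have : dv j.+1 (2 ^+ j).
  have -> : (2 ^+ j : int) = (2 ^+ j - 2 ^+ j') + 2 ^+ j' by ring.
  by apply: dv_add => //; apply: dv_p2.
exact: exv_ndv (exv_p2 j).
Qed.

Lemma BB_aux j j' x : (j < j')%N ->
  ~ (ball (Z2c (2 ^ j)) j.+1 x /\ ball (Z2c (2 ^ j')) j'.+1 x).
Proof.
move=> hjj [h1 h2]; have h2' := @ball_low _ _ j.+1 _ h2 ltac:(lia).
have := two_centers (rep_cB j.+1 j) (rep_cB j.+1 j') h1 h2'.
move=> hd; have : dv j.+1 (2 ^+ j).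
  have -> : (2 ^+ j : int) = (2 ^+ j - 2 ^+ j') + 2 ^+ j' by ring.
  by apply: dv_add => //; apply: dv_p2.
exact: exv_ndv (exv_p2 j).
Qed.

Lemma AA_part m n n' x : (4 <= n)%N -> (4 <= n')%N -> n <> n' ->
  ~ (ball (Z2add (pZ m) (Z2c (2 ^ (n - 2)))) (n - 1) x /\
     ball (Z2add (pZ m) (Z2c (2 ^ (n' - 2)))) (n' - 1) x).
Proof.
move=> /gj [j hj ->] /gj [j' hj' ->] hne; rewrite !e2 /=.
case: (ltngtP j j') => h.
- exact: AA_aux.
- by case=> a b; apply: (@AA_aux m j' j x h).
- by subst.
Qed.

Lemma BB_part n n' x : (4 <= n)%N -> (4 <= n')%N -> n <> n' ->
  ~ (ball (Z2c (2 ^ (n - 2))) (n - 1) x /\ ball (Z2c (2 ^ (n' - 2))) (n' - 1) x).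
Proof.
move=> /gj [j hj ->] /gj [j' hj' ->] hne; rewrite !e2 /=.
case: (ltngtP j j') => h.
- exact: BB_aux.
- by case=> a b; apply: (@BB_aux j' j x h).
- by subst.
Qed.

Lemma AB_part m n n' x : (4 <= n)%N -> (4 <= n')%N ->
  ~ (ball (Z2add (pZ m) (Z2c (2 ^ (n - 2)))) (n - 1) x /\
     ball (Z2c (2 ^ (n' - 2))) (n' - 1) x).
Proof.
move=> /gj [j hj ->] /gj [j' hj' ->]; rewrite !e2 /= => -[h1 h2].
have h1' := @ball_low _ _ 2 _ h1 ltac:(lia).
have h2' := @ball_low _ _ 2 _ h2 ltac:(lia).
have rm := rep_res 2 m.
have := two_centers (rep_cA j rm) (rep_cB 2 j') h1' h2'.
rewrite (_ : _ - _ = (2 ^+ j - 2 ^+ j') + PP (res m 2)%:Z); last by ring.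
apply: exv_ndv; apply: dv2_P; apply: dv_sub; apply: dv_p2; lia.
Qed.

Lemma dvPP k M : (k <= 1)%N -> dv k (PP M).
Proof. by move=> hk; apply: (@dv_le _ 1) => //; exists (2 * M + 1); rewrite /PP expr1; ring. Qed.

Lemma decomp_part m v x :
  ball (Z2c 0) 1 x <->
  (x = Z2c 0 \/ x = pZ m \/
   (exists2 n, (4 <= n)%N & ball (Z2add (pZ m) (Z2c (2 ^ (n - 2)))) (n - 1) x) \/
   (exists2 n, (4 <= n <= v./2 + 3)%N & ball (Z2c (2 ^ (n - 2))) (n - 1) x) \/
   (exists2 n, (v./2 + 3 < n)%N & ball (Z2c (2 ^ (n - 2))) (n - 1) x)).
Proof.
have r0 : forall k, rep k (Z2c 0) 0 by move=> k; exact: (rep_Z2c k 0).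
split.
  move=> hx; have h1 : res x 1 = 0%N by rewrite hx.
  have : (res x 2 = 0 \/ res x 2 = 2)%N.
    by have := res_lt x 2; have := res_low x (isT : (1 <= 2)%N); rewrite h1; lia.
  case=> h2.
  - case: (classic (x = Z2c 0)) => [->|hne]; first by left.
    have [j [hj ej nj]] := first_diff hne ltac:(by rewrite h2).
    have ex : res x j.+1 = res (Z2c (2 ^ j)) j.+1.
      apply: (next_level ej nj).
        apply: (rep_eq (X := 0)); last exact: r0.
        by apply: (rep_congr (rep_cB j j)); rewrite subr0; apply: dv_p2.
      move=> E; have h0 : rep j.+1 (Z2c (2 ^ j)) 0 by rewrite /rep E; apply: r0.
      have := rep_dv (rep_cB j.+1 j) h0.
      by rewrite subr0; apply: exv_ndv; apply: exv_p2.
    right; right; right.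
    case: (leqP j.+2 (v./2 + 3)) => hN; [left | right]; exists j.+2;
      rewrite ?e2 //; lia.
  - case: (classic (x = pZ m)) => [->|hne]; first by right; left.
    have rp := fun k => rep_p (rep_res k m).
    have p2 : res (pZ m) 2 = 2%N.
      transitivity (res (Z2c 2) 2); last by [].
      apply: (rep_eq (X := 2%N%:Z)); last exact: rep_Z2c.
      apply: (rep_congr (rp 2)); exists (res m 2)%:Z; rewrite /PP expr2; ring.
    have [j [hj ej nj]] := first_diff hne ltac:(by rewrite h2 p2).
    have ex : res x j.+1 = res (Z2add (pZ m) (Z2c (2 ^ j))) j.+1.
      apply: (next_level ej nj).
        apply: (rep_eq (X := PP (res m j)%:Z)); last exact: rp.
        apply: (rep_congr (rep_cA j (rep_res j m))).
        by rewrite (_ : _ - _ = 2 ^+ j); [apply: dv_p2 | ring].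
      move=> E; have h0 : rep j.+1 (Z2add (pZ m) (Z2c (2 ^ j))) (PP (res m j.+1)%:Z).
        by rewrite /rep E; apply: rp.
      have := rep_dv (rep_cA j (rep_res j.+1 m)) h0.
      by rewrite (_ : _ - _ = 2 ^+ j); [apply: exv_ndv; apply: exv_p2 | ring].
    by right; right; left; exists j.+2; rewrite ?e2 //; lia.
case=> [->|[E|[[n hn hA]|[[n hn hB]|[n hn hB]]]]] //.
- rewrite E; apply: (rep_eq (X := 0)); last exact: r0.
  by apply: (rep_congr (rep_p (rep_res 1 m))); rewrite subr0; apply: dvPP.
- have := @ball_low _ _ 1 _ hA ltac:(lia); rewrite /ball => ->.
  apply: (rep_eq (X := 0)); last exact: r0.
  apply: (rep_congr (rep_cA (n - 2) (rep_res 1 m))); rewrite subr0.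
  by apply: dv_add; [apply: dvPP | apply: dv_p2; lia].
- have := @ball_low _ _ 1 _ hB ltac:(lia); rewrite /ball => ->.
  apply: (rep_eq (X := 0)); last exact: r0.
  by apply: (rep_congr (rep_cB 1 (n - 2))); rewrite subr0; apply: dv_p2; lia.
- have := @ball_low _ _ 1 _ hB ltac:(lia); rewrite /ball => ->.
  apply: (rep_eq (X := 0)); last exact: r0.
  by apply: (rep_congr (rep_cB 1 (n - 2))); rewrite subr0; apply: dv_p2; lia.
Qed.
Local Close Scope ring_scope.
Theorem theorem6p4 (m : Z2) (v : nat) :
  v2_is m v -> odd v ->
  let f := fm m in
  let p := Z2add (Z2mul (Z2c 4) m) (Z2c 2) in                 (* 4m+2 *)
  let A := fun n : nat => ball (Z2add p (Z2c (2 ^ (n - 2)))) (n - 1) in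
                                         (* 4m+2+2^(n-2)+2^(n-1)Z_2 *)
  let B := fun n : nat => ball (Z2c (2 ^ (n - 2))) (n - 1) in
                                         (* 2^(n-2)+2^(n-1)Z_2 *)
  let N := v./2 + 3 in                   (* floor(v_2(m)/2) + 3 *)
  (* the fixed points of f are exactly 0 and 4m+2 *)
  (forall x, f x = x <-> x = Z2c 0 \/ x = p) /\
  (* f(1 + 2Z_2) is contained in 2Z_2 *)
  (forall x, ball (Z2c 1) 1 x -> ball (Z2c 0) 1 (f x)) /\
  (* 2Z_2 = {0, 4m+2} u E_1 u E_2 u E_3 ... *)
  (forall x, ball (Z2c 0) 1 x <->
     (x = Z2c 0 \/ x = p \/
      (exists2 n, 4 <= n & A n x) \/
      (exists2 n, 4 <= n <= N & B n x) \/
      (exists2 n, N < n & B n x))) /\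
  (* ... and all the pieces are pairwise disjoint *)
  Z2c 0 <> p /\
  (forall n, 4 <= n -> [/\ ~ A n (Z2c 0), ~ A n p, ~ B n (Z2c 0) & ~ B n p]) /\
  (forall n n' x, 4 <= n -> 4 <= n' -> n <> n' -> ~ (A n x /\ A n' x)) /\
  (forall n n' x, 4 <= n -> 4 <= n' -> n <> n' -> ~ (B n x /\ B n' x)) /\
  (forall n n' x, 4 <= n -> 4 <= n' -> ~ (A n x /\ B n' x)) /\
  (* types of the pieces *)
  (forall n, 4 <= n -> typeII f 1 (A n)) /\
  (forall n, 4 <= n <= N -> typeII f (2 * n - 5) (B n)) /\
  (forall n, N < n -> typeII f (v + 1) (B n)).
Proof.
move=> hv hodd f p A B N.
have rp : forall k, rep k p (PP (res m k)%:Z) by move=> k; apply: rep_p; apply: rep_res.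
have r0 : forall k, rep k (Z2c 0) 0 by move=> k; exact: (rep_Z2c k 0).
have ev : v = (v./2 * 2).+1.
  by have := odd_double_half v; rewrite hodd -muln2 /=; lia.
have gj : forall n, (4 <= n)%N -> exists2 j, (2 <= j)%N & n = j.+2.
  by move=> n hn; exists (n - 2)%N; lia.
have e2 : forall j, (j.+2 - 2 = j)%N by move=> j; lia.
split; first by move=> x; exact: fix_part.
split; first by move=> x; exact: odd_part.
split; first by move=> x; exact: (decomp_part m v x).
split; first exact: neq_part.
split; first by move=> n hn; exact: pts_part.
split; first by move=> n n' x hn hn' hne; exact: AA_part.
split; first by move=> n n' x hn hn' hne; exact: BB_part.
split; first by move=> n n' x hn hn'; exact: AB_part.
split.
  move=> n /gj [j hj ->]; rewrite /A /= e2; exact: caseA_typeII hv hodd hj.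
split.
  move=> n /andP [/gj [j hj ->] hn]; rewrite /B /= e2; apply: (caseB_typeII hv hodd hj).
  by rewrite ifT; lia.
move=> n hn; have /gj [j hj En] : (4 <= n)%N by lia.
rewrite En in hn *; rewrite /B /= e2; apply: (caseB_typeII hv hodd hj).
by rewrite ifF; lia.
Qed.
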